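(* Let $\mathfrak g$ be a finite-dimensional complex simple Lie algebra, $\lambda\in P^+$, and $\boldsymbol\lambda=(\lambda_1,\lambda_2),\boldsymbol\mu=(\mu_1,\mu_2)\in P^+(\lambda,2)$ with $\boldsymbol\lambda\prec\boldsymbol\mu$. Suppose there exist $w\in W$ and $i_0\in I$ such that $w(\lambda_1-\lambda_2)\in P^+$ and $$w(\lambda_1-\mu_1)(h_{i_0})\cdot w(\mu_1-\lambda_2)(h_{i_0})>0.$$ Then $(\lambda_1-w^{-1}\omega_{i_0},\ \lambda_2+w^{-1}\omega_{i_0})\in P^+(\lambda,2)$ and $$\boldsymbol\lambda\prec(\lambda_1-w^{-1}\omega_{i_0},\ \lambda_2+w^{-1}\omega_{i_0})\preceq\boldsymbol\mu.$$
   Context: $\mathfrak g$ has simple roots $\alpha_i$ ($i\in I$), fundamental weights $\omega_i$, positive roots $R^+$, coroots $h_\alpha$, $h_i=h_{\alpha_i}$, Weyl group $W$, dominant integral weights $P^+$. $P^+(\lambda,2)=\{(\lambda_1,\lambda_2)\in(P^+)^2:\lambda_1+\lambda_2=\lambda\}$; $(\lambda_1,\lambda_2)\preceq(\mu_1,\mu_2)$ means $\min\{\lambda_1(h_\alpha),\lambda_2(h_\alpha)\}\le\min\{\mu_1(h_\alpha),\mu_2(h_\alpha)\}$ for all $\alpha\in R^+$; $\sim$ means equality of these minima for all $\alpha\in R^+$; $\boldsymbol\lambda\prec\boldsymbol\mu$ means $\boldsymbol\lambda\preceq\boldsymbol\mu$ and not $\boldsymbol\lambda\sim\boldsymbol\mu$.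 *)

(* Defs.v *)
(* Combinatorial root datum of a finite-dimensional complex
   simple Lie algebra, encoded by its Cartan matrix. *)
From HB Require Import structures.
From mathcomp Require Import all_boot all_order all_algebra.
Set Implicit Arguments. Unset Strict Implicit. Unset Printing Implicit Defensive.
Import Order.TTheory GRing.Theory Num.Theory.
Local Open Scope ring_scope.

(* Convention: A i j = alpha_j(h_i)  (Kac's convention). *)

(* A is the Cartan matrix of a finite-dimensional complex simple Lie algebra:
   a generalized Cartan matrix that is indecomposable and symmetrizable with
   positive definite symmetrization (Serre / Kac, Ch. 4). *)
Definition finite_simple_cartan (n : nat) (A : 'I_n -> 'I_n -> int) : Prop :=
  (0 < n)%N /\ [/\ (forall i, A i i = 2),
      (forall i j, i != j -> A i j <= 0),
      (forall i j, (A i j == 0) = (A j i == 0)),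
      (forall S : {set 'I_n}, S != set0 -> S != setT ->
          exists i j, [/\ i \in S, j \notin S & A i j != 0]) &
      exists d : 'I_n -> rat,
        [/\ (forall i, 0 < d i),
            (forall i j, d i * (A i j)%:~R = d j * (A j i)%:~R) &
            (forall x : 'I_n -> rat, (exists i, x i != 0) ->
               0 < \sum_i \sum_j x i * d i * (A i j)%:~R * x j)]].

(* Integral weights, written in the basis of fundamental weights:
   lam i = lam(h_i). *)
Definition weight (n : nat) := {ffun 'I_n -> int}.

Definition dominant (n : nat) (lam : weight n) : Prop := forall i, 0 <= lam i.

Definition fund_weight (n : nat) (i : 'I_n) : weight n :=
  [ffun j => if j == i then 1 else 0].

(* simple reflection s_j on weights: s_j(lam) = lam - lam(h_j) alpha_j *)
Definition sref (n : nat) (A : 'I_n -> 'I_n -> int) (j : 'I_n) (lam : weight n)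
  : weight n := [ffun i => lam i - lam j * A i j].

(* Weyl group elements are represented by words w = [:: j1; ...; jk],
   standing for s_{j1} ... s_{jk}; w^{-1} is the reversed word. *)
Definition wact (n : nat) (A : 'I_n -> 'I_n -> int) (w : seq 'I_n) (lam : weight n)
  : weight n := foldr (sref A) lam w.

(* Coroots, written in the basis of simple coroots h_i. *)
Definition coweight (n : nat) := {ffun 'I_n -> int}.

Definition simple_coroot (n : nat) (i : 'I_n) : coweight n :=
  [ffun k => if k == i then 1 else 0].

(* s_j(h) = h - alpha_j(h) h_j *)
Definition sref_co (n : nat) (A : 'I_n -> 'I_n -> int) (j : 'I_n) (h : coweight n)
  : coweight n :=
  [ffun k => h k - (if k == j then \sum_i h i * A i j else 0)].

Definition wact_co (n : nat) (A : 'I_n -> 'I_n -> int) (w : seq 'I_n) (h : coweight n)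
  : coweight n := foldr (sref_co A) h w.

(* h is a coroot h_alpha for some positive root alpha: coroots form the
   W-orbit of the simple coroots, positivity = nonnegative coordinates. *)
Definition pos_coroot (n : nat) (A : 'I_n -> 'I_n -> int) (h : coweight n) : Prop :=
  (exists (w : seq 'I_n) (i : 'I_n), h = wact_co A w (simple_coroot i))
  /\ (forall k, 0 <= h k).

Definition pairing (n : nat) (lam : weight n) (h : coweight n) : int :=
  \sum_i h i * lam i.

Definition inP2 (n : nat) (lam : weight n) (p : weight n * weight n) : Prop :=
  [/\ dominant p.1, dominant p.2 & p.1 + p.2 = lam].

Definition minpair (n : nat) (p : weight n * weight n) (h : coweight n) : int :=
  Num.min (pairing p.1 h) (pairing p.2 h).

Definition preceq (n : nat) (A : 'I_n -> 'I_n -> int) (p q : weight n * weight n)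
  : Prop := forall h, pos_coroot A h -> minpair p h <= minpair q h.

Definition simeq (n : nat) (A : 'I_n -> 'I_n -> int) (p q : weight n * weight n)
  : Prop := forall h, pos_coroot A h -> minpair p h = minpair q h.

Definition prec (n : nat) (A : 'I_n -> 'I_n -> int) (p q : weight n * weight n)
  : Prop := preceq A p q /\ ~ simeq A p q.

(* Main.v *)
Require Import Defs.
From HB Require Import structures.
From mathcomp Require Import all_boot all_order all_algebra.
From mathcomp Require Import zify ring lra.
From Stdlib Require Import Classical.
Import Order.TTheory GRing.Theory Num.Theory.
Local Open Scope ring_scope.
Set Implicit Arguments. Unset Strict Implicit. Unset Printing Implicit Defensive.

Section Weyl.
Variable n : nat.
Variable A : 'I_n -> 'I_n -> int.
Hypothesis A2 : forall i, A i i = 2.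

Definition alp (j : 'I_n) (h : coweight n) : int := \sum_i h i * A i j.

Lemma sref_coE j h k : sref_co A j h k = h k - (if k == j then alp j h else 0).
Proof. by rewrite ffunE. Qed.

Lemma sum_pt (s : 'I_n) (X : int) (F : 'I_n -> int) :
  \sum_i (if i == s then X else 0) * F i = X * F s.
Proof.
rewrite (bigD1 s) //= eqxx big1 ?addr0 // => i /negbTE ->; by rewrite mul0r.
Qed.

Lemma alp_sref j h : alp j (sref_co A j h) = - alp j h.
Proof.
rewrite /alp.
under eq_bigr => i _ do rewrite sref_coE mulrBl.
rewrite sumrB.
have -> : \sum_i (if i == j then \sum_i0 h i0 * A i0 j else 0) * A i j
   = (\sum_i0 h i0 * A i0 j) * A j j by exact: sum_pt.
rewrite A2; ring.
Qed.

Lemma sref_co_invol j h : sref_co A j (sref_co A j h) = h.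
Proof.
apply/ffunP => k; rewrite sref_coE alp_sref sref_coE.
by case: (k == j); ring.
Qed.

Lemma wact_co_cat u v h : wact_co A (u ++ v) h = wact_co A u (wact_co A v h).
Proof. by rewrite /wact_co foldr_cat. Qed.

Lemma wact_co_cons j u h : wact_co A (j :: u) h = sref_co A j (wact_co A u h).
Proof. by []. Qed.

Lemma wact_co_rcons u j h : wact_co A (rcons u j) h = wact_co A u (sref_co A j h).
Proof. by rewrite -cats1 wact_co_cat. Qed.

Lemma wact_co_revK w h : wact_co A (rev w) (wact_co A w h) = h.
Proof.
elim: w h => [//|j w IH] h.
by rewrite rev_cons wact_co_rcons wact_co_cons sref_co_invol IH.
Qed.

Lemma wact_co_Krev w h : wact_co A w (wact_co A (rev w) h) = h.
Proof. by rewrite -{1}(revK w) wact_co_revK. Qed.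

Definition lc (a b : int) (g1 g2 : coweight n) : coweight n :=
  [ffun k => a * g1 k + b * g2 k].

Lemma alp_lc j a b g1 g2 : alp j (lc a b g1 g2) = a * alp j g1 + b * alp j g2.
Proof.
rewrite /alp !mulr_sumr -big_split /=; apply: eq_bigr => i _; rewrite ffunE; ring.
Qed.

Lemma sref_lc j a b g1 g2 :
  sref_co A j (lc a b g1 g2) = lc a b (sref_co A j g1) (sref_co A j g2).
Proof.
apply/ffunP => k; rewrite !(sref_coE, ffunE) alp_lc; case: (k == j); ring.
Qed.

Lemma wact_lc w a b g1 g2 :
  wact_co A w (lc a b g1 g2) = lc a b (wact_co A w g1) (wact_co A w g2).
Proof. elim: w => [//|j w IH]; by rewrite !wact_co_cons IH sref_lc. Qed.

Lemma sref_simple j : sref_co A j (simple_coroot j) = lc (-1) 0 (simple_coroot j) (simple_coroot j).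
Proof.
have ha : alp j (simple_coroot j) = 2.
  by rewrite /alp (eq_bigr (fun i => (if i == j then 1 else 0) * A i j)) ?sum_pt ?mul1r ?A2 // => i _; rewrite ffunE.
apply/ffunP => k; rewrite sref_coE ha !ffunE; case: (k == j); ring.
Qed.

Definition eqw (u v : seq 'I_n) := forall h, wact_co A u h = wact_co A v h.
Definition reduced (u : seq 'I_n) := forall u', eqw u' u -> (size u <= size u')%N.

Lemma eqw_refl u : eqw u u. Proof. by []. Qed.
Lemma eqw_sym u v : eqw u v -> eqw v u. Proof. by move=> H h; rewrite H. Qed.
Lemma eqw_trans u v x : eqw u v -> eqw v x -> eqw u x. Proof. by move=> H1 H2 h; rewrite H1 H2. Qed.
Lemma eqw_catl c u v : eqw u v -> eqw (c ++ u) (c ++ v).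
Proof. by move=> H h; rewrite !wact_co_cat H. Qed.
Lemma eqw_catr c u v : eqw u v -> eqw (u ++ c) (v ++ c).
Proof. by move=> H h; rewrite !wact_co_cat H. Qed.
Lemma eqw_dbl u j v : eqw (u ++ j :: j :: v) (u ++ v).
Proof. by move=> h; rewrite !wact_co_cat !wact_co_cons sref_co_invol. Qed.

Lemma min_exists (P : nat -> Prop) : (exists k, P k) -> exists k, P k /\ forall m, P m -> (k <= m)%N.
Proof.
move=> [k Hk]; elim: k {-2}k (leqnn k) Hk => [|N IH] k Hk Pk.
  by exists k; split => // m _; move: Hk; rewrite leqn0 => /eqP ->.
case: (classic (exists m, P m /\ (m < k)%N)) => [[m [Pm Hm]]|Hn].
  apply: (IH m) => //; lia.
exists k; split => // m Pm; case: (leqP k m) => // Hmk; exfalso; apply: Hn; by exists m.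
Qed.

Lemma reduced_exists u : exists u', eqw u' u /\ reduced u'.
Proof.
have [k [[u' [E S]] M]] := @min_exists (fun k => exists u', eqw u' u /\ size u' = k) (ex_intro _ _ (ex_intro _ u (conj (eqw_refl u) erefl))).
exists u'; split => // v Ev; rewrite S; apply: M; exists v; split => //; exact: eqw_trans Ev E.
Qed.

End Weyl.

Definition stepS (p b : int) (st : int * int) := (st.1 - (p + 2 * st.1 + b * st.2), st.2).
Definition stepT (q a : int) (st : int * int) := (st.1, st.2 - (q + a * st.1 + 2 * st.2)).
Fixpoint altN (p q a b : int) (c : bool) (k : nat) (st : int * int) : int * int :=
  match k with 0 => st | k'.+1 => altN p q a b (~~ c) k' (if c then stepS p b st else stepT q a st) end.

Section Rank2.
Variable n : nat.
Variable A : 'I_n -> 'I_n -> int.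
Hypothesis A2 : forall i, A i i = 2.
Variables s t : 'I_n.
Hypothesis st_neq : s != t.

Definition shift (h : coweight n) (X Y : int) : coweight n :=
  [ffun k => h k + (if k == s then X else 0) + (if k == t then Y else 0)].

Lemma alp_shift j h X Y : alp A j (shift h X Y) = alp A j h + X * A s j + Y * A t j.
Proof.
rewrite /alp.
under eq_bigr => i _ do rewrite ffunE !mulrDl.
by rewrite !big_split /= !sum_pt.
Qed.

Lemma sref_shift_s h X Y :
  sref_co A s (shift h X Y) = shift h (stepS (alp A s h) (A t s) (X, Y)).1 (stepS (alp A s h) (A t s) (X, Y)).2.
Proof.
apply/ffunP => k; rewrite sref_coE alp_shift A2 !ffunE /=.
case: (eqVneq k s) => [->|ks]; first by rewrite (negbTE st_neq); ring.
by rewrite subr0.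
Qed.

Lemma sref_shift_t h X Y :
  sref_co A t (shift h X Y) = shift h (stepT (alp A t h) (A s t) (X, Y)).1 (stepT (alp A t h) (A s t) (X, Y)).2.
Proof.
apply/ffunP => k; rewrite sref_coE alp_shift A2 !ffunE /=.
case: (eqVneq k t) => [->|kt]; first by rewrite eq_sym (negbTE st_neq); ring.
by rewrite subr0.
Qed.

Fixpoint altw (c d : 'I_n) (k : nat) : seq 'I_n :=
  match k with 0 => [::] | k'.+1 => rcons (altw d c k') c end.

Definition ch (c : bool) := if c then s else t.

Lemma wact_altw h c k X Y :
  wact_co A (altw (ch c) (ch (~~ c)) k) (shift h X Y) =
  shift h (altN (alp A s h) (alp A t h) (A s t) (A t s) c k (X, Y)).1
          (altN (alp A s h) (alp A t h) (A s t) (A t s) c k (X, Y)).2.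
Proof.
elim: k c X Y => [//|k IH] c X Y.
rewrite /= wact_co_rcons.
have -> : ch c = ch (~~ ~~ c) by rewrite negbK.
rewrite negbK.
case: c => /=; [rewrite sref_shift_s | rewrite sref_shift_t];
  [exact: (IH false) | exact: (IH true)].
Qed.

Lemma shift0 h : shift h 0 0 = h.
Proof. by apply/ffunP => k; rewrite ffunE; case: (k == s); case: (k == t); rewrite ?addr0. Qed.

End Rank2.

Unset Implicit Arguments.

Definition mab (a b : int) : nat :=
  if (a == 0) then 2%N else if a * b == 1 then 3%N else if a * b == 2 then 4%N else 6%N.

Lemma braid_ok (a b : int) : (a, b) \in [:: (0,0); (-1,-1); (-1,-2); (-2,-1); (-1,-3); (-3,-1)] ->
  forall p q, altN p q a b true (mab a b) (0,0) = altN p q a b false (mab a b) (0,0).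
Proof.
rewrite !inE => H p q.
repeat (case/orP: H => H; [move/eqP: H => [-> ->]; rewrite /mab /= /stepS /stepT /=; congr pair; ring|]).
by move/eqP: H => [-> ->]; rewrite /mab /= /stepS /stepT /=; congr pair; ring.
Qed.

Lemma nonneg_ok (a b : int) : (a, b) \in [:: (0,0); (-1,-1); (-1,-2); (-2,-1); (-1,-3); (-3,-1)] ->
  forall k, (k < mab a b)%N -> 0 <= (altN 0 0 a b false k (1,0)).1 /\ 0 <= (altN 0 0 a b false k (1,0)).2.
Proof.
rewrite !inE => H k.
repeat (case/orP: H => H; [move/eqP: H => [-> ->]; rewrite /mab /=;
   do 6! (case: k => [|k]; first by vm_compute; split); by [] |]).
by move/eqP: H => [-> ->]; rewrite /mab /=;
   do 6! (case: k => [|k]; first by vm_compute; split).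
Qed.

Section Dihedral.
Variable n : nat.
Variable A : 'I_n -> 'I_n -> int.
Hypothesis A2 : forall i, A i i = 2.
Variables s t : 'I_n.
Hypothesis st_neq : s != t.
Hypothesis hab : (A s t, A t s) \in [:: (0,0); (-1,-1); (-1,-2); (-2,-1); (-1,-3); (-3,-1)].

Notation ch := (ch s t).
Definition Iword (u : seq 'I_n) := all (fun j => (j == s) || (j == t)) u.
Definition Ired (u : seq 'I_n) := forall u', Iword u' -> eqw A u' u -> (size u <= size u')%N.

Lemma Iword_ch c : (ch c == s) || (ch c == t).
Proof. by case: c; rewrite /= eqxx ?orbT. Qed.

Lemma Iword_altw c d k : Iword (altw (ch c) (ch d) k).
Proof.
elim: k c d => [//|k IH] c d /=.
by rewrite /Iword all_rcons Iword_ch; apply: IH.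
Qed.

Lemma I_ch j c : (j == s) || (j == t) -> j = ch c \/ j = ch (~~ c).
Proof. by case/orP => /eqP ->; case: c; [left|right|right|left]. Qed.

Lemma eqw_rcons u v j : eqw A u v -> eqw A (rcons u j) (rcons v j).
Proof. by move=> E; rewrite -!cats1; apply: eqw_catr. Qed.

Lemma Iword_rcons u j : Iword (rcons u j) = ((j == s) || (j == t)) && Iword u.
Proof. by rewrite /Iword all_rcons. Qed.

Lemma alt_struct u c : Iword u -> Ired u -> (u = [::] \/ exists u1, u = rcons u1 (ch c)) ->
  u = altw (ch c) (ch (~~ c)) (size u).
Proof.
elim/last_ind: u c => [//|u1 e IH] c Iu Ru Lu.
have ee : e = ch c.
  case: Lu => [/eqP|[u2 /eqP]]; first by rewrite -size_eq0 size_rcons.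
  by rewrite eqseq_rcons => /andP[_ /eqP].
rewrite ee size_rcons /=; rewrite ee in Iu Ru; clear Lu ee.
move: (Iu); rewrite Iword_rcons => /andP[eI Iu1].
have Ru1 : Ired u1.
  move=> u' Iu' E; have := Ru (rcons u' (ch c)).
  rewrite Iword_rcons Iu' Iword_ch !size_rcons; apply => //; exact: eqw_rcons.
case/lastP: u1 IH Iu1 Ru1 Iu Ru => [|u2 e'] IH Iu1 Ru1 Iu Ru; first by [].
move: (Iu1); rewrite Iword_rcons => /andP[e'I Iu2].
case: (@I_ch e' c e'I) => e'E.
  exfalso; have := Ru u2 Iu2.
  rewrite !size_rcons => H; have : ((size u2).+2 <= size u2)%N -> False by rewrite ltnNge ltnW.
  apply; apply: H => h.
  rewrite e'E -!cats1 -catA /=.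
  by rewrite (eqw_dbl A2 u2 (ch c) [::] h) cats0.
have := IH (~~ c) Iu1 Ru1 (or_intror (ex_intro _ u2 (congr1 _ e'E))).
by rewrite negbK => <-.
Qed.

Lemma altw_cat c j m : altw (ch c) (ch (~~ c)) (j + m) =
  altw (ch (c (+) odd m)) (ch (~~ (c (+) odd m))) j ++ altw (ch c) (ch (~~ c)) m.
Proof.
elim: m c => [|m IH] c; first by rewrite addn0 addbF cats0.
rewrite addnS /=.
have := IH (~~ c); rewrite negbK => ->.
by rewrite rcons_cat addNb addbN.
Qed.

Lemma size_altw (c d : 'I_n) k : size (altw c d k) = k.
Proof. by elim: k c d => [//|k IH] c d /=; rewrite size_rcons IH. Qed.

Lemma alp0 j : alp A j 0 = 0.
Proof. by rewrite /alp big1 // => i _; rewrite ffunE mul0r. Qed.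

Lemma simple_shift : simple_coroot s = shift s t 0 1 0.
Proof.
apply/ffunP => k; rewrite !ffunE add0r.
case: (eqVneq k s) => [->|ks]; first by rewrite (negbTE st_neq) addr0.
by case: (k == t); rewrite ?addr0.
Qed.

Lemma braid_eqw : eqw A (altw (ch true) (ch false) (mab (A s t) (A t s)))
                        (altw (ch false) (ch true) (mab (A s t) (A t s))).
Proof.
move=> h; rewrite -(shift0 s t h).
have := wact_altw A2 st_neq h true (mab (A s t) (A t s)) 0 0.
have := wact_altw A2 st_neq h false (mab (A s t) (A t s)) 0 0.
rewrite /= => -> ->.
by rewrite (@braid_ok _ _ hab).
Qed.

Lemma mab_ge2 : (2 <= mab (A s t) (A t s))%N.
Proof. by rewrite /mab; repeat case: ifP. Qed.

Lemma dihedral u : Iword u -> Ired u ->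
  (forall u', Iword u' -> eqw A u' (rcons u s) -> (size u <= size u')%N) ->
  exists X Y, 0 <= X /\ 0 <= Y /\ wact_co A u (simple_coroot s) = shift s t 0 X Y.
Proof.
move=> Iu Ru R2.
have Lu : u = [::] \/ exists u1, u = rcons u1 (ch false).
  case/lastP: u Iu Ru R2 => [|u1 e] Iu Ru R2; first by left.
  move: (Iu); rewrite Iword_rcons => /andP[eI Iu1].
  case: (@I_ch e true eI) => /= eE; last by right; exists u1; rewrite eE.
  exfalso; have := R2 u1 Iu1.
  rewrite size_rcons ltnn => H.
  suff : false by [].
  apply: H => h.
  by rewrite eE -!cats1 -catA /= (eqw_dbl A2 u1 s [::] h) cats0.
have uE : u = altw (ch false) (ch (~~ false)) (size u) by apply: alt_struct.
set k := size u in uE.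
set m := mab (A s t) (A t s).
have m2 : (2 <= m)%N by exact: mab_ge2.
case: (leqP m k) => km.
  exfalso.
  have [j' jE] : exists j', k.+1 = (j'.+1 + m)%N by exists (k - m)%N; lia.
  have E1 : rcons u s = altw (ch true) (ch false) (j'.+1 + m) by rewrite -jE uE.
  rewrite altw_cat /= in E1.
  have mE : m = (1 + m.-1)%N by rewrite add1n prednK // ltnW.
  have oddE : odd m.-1 = ~~ odd m by case: (m) m2 => [//|m'] _ /=; rewrite negbK.
  have E3 : altw (ch false) (ch true) m = [:: ch (~~ odd m)] ++ altw (ch false) (ch true) m.-1.
    by rewrite {1}mE (altw_cat false 1 m.-1) oddE.
  have E2 := eqw_catl (altw (ch (~~ odd m)) (ch (~~ ~~ odd m)) j'.+1) braid_eqw.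
  rewrite -/m E3 /= in E2.
  have := R2 (altw (ch (~~ ~~ odd m)) (ch (~~ odd m)) j' ++ altw (ch false) (ch (~~ false)) m.-1).
  rewrite /Iword all_cat -!/(Iword _) !Iword_altw size_cat !size_altw => /(_ erefl).
  have : (k <= j' + m.-1)%N -> False.
    move: jE; rewrite addSn => -[->]; rewrite -subn1; lia.
  move=> H H2; apply: H; apply: H2.
  apply: eqw_sym; rewrite E1; apply: (eqw_trans E2).
  rewrite negbK /=.
  have := eqw_dbl A2 (altw (ch (~~ ~~ odd m)) (ch (~~ odd m)) j') (ch (~~ odd m)) (altw (ch false) (ch true) m.-1).
  by rewrite negbK -cats1 -catA.
have := wact_altw A2 st_neq 0 false k 1 0.
rewrite -simple_shift -uE !alp0 => ->.
have [H1 H2] := @nonneg_ok _ _ hab _ km.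
by do 2 eexists; split; [exact: H1|split; [exact: H2|]].
Qed.
End Dihedral.

Section Humph.
Variable n : nat.
Variable A : 'I_n -> 'I_n -> int.
Hypothesis A2 : forall i, A i i = 2.
Hypothesis hAll : forall s t : 'I_n, s != t ->
  (A s t, A t s) \in [:: (0,0); (-1,-1); (-1,-2); (-2,-1); (-1,-3); (-3,-1)].

Lemma shift_lc (s t : 'I_n) X Y : s != t ->
  shift s t 0 X Y = lc X Y (simple_coroot s) (simple_coroot t).
Proof.
move=> st; apply/ffunP => k; rewrite !ffunE add0r.
by case: (k == s); case: (k == t); rewrite ?mulr1 ?mulr0 ?addr0 ?add0r.
Qed.

Lemma humph N : forall w s, reduced A w -> size w = N ->
  (forall w', eqw A w' (rcons w s) -> (N <= size w')%N) ->
  forall k, 0 <= wact_co A w (simple_coroot s) k.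
Proof.
elim/ltn_ind: N => N IHN w s Rw Sw Hs.
case/lastP: w Rw Sw Hs => [|w1 t] Rw Sw Hs.
  by move=> k; rewrite /= ffunE; case: (k == s).
have ts : t != s.
  apply/negP => /eqP ets; have := Hs w1.
  rewrite -Sw size_rcons ltnn => H; suff : false by []; apply: H => h.
  by rewrite ets -!cats1 -catA /= (eqw_dbl A2 w1 s [::] h) cats0.
have st : s != t by rewrite eq_sym.
pose good v u := [/\ reduced A v, Iword n s t u, eqw A (v ++ u) (rcons w1 t) & (size v + size u)%N = N].
have Rw1 : reduced A w1.
  move=> u' E; have := Rw (rcons u' t).
  rewrite !size_rcons ltnS; apply; exact: eqw_rcons.
have g0 : good w1 [:: t].
  split => //; first by rewrite /Iword /= eqxx orbT.
  by rewrite cats1.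
  by rewrite -Sw size_rcons addn1.
have [kk [[v [u [[Rv Iu Evu Svu] Sv]]] Mv]] :=
  @min_exists (fun k => exists v u, good v u /\ size v = k)
     (ex_intro _ _ (ex_intro _ w1 (ex_intro _ [:: t] (conj g0 erefl)))).
subst kk.
have Rwrc : forall w', eqw A w' (rcons w1 t) -> (N <= size w')%N.
  by move=> w' E; rewrite -Sw; apply: Rw.
have vsmall : (size v < N)%N.
  have := Mv (size w1) (ex_intro _ w1 (ex_intro _ [:: t] (conj g0 erefl))).
  move: Sw; rewrite size_rcons; lia.
have Hx : forall x, (x == s) || (x == t) -> forall v', eqw A v' (rcons v x) -> (size v <= size v')%N.
  move=> x xI v' E; case: (leqP (size v) (size v')) => // lt.
  have [v'' [E'' R'']] := reduced_exists A v'.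
  have S'' := R'' v' (eqw_sym E'').
  have E3 : eqw A (v'' ++ x :: u) (rcons w1 t).
    apply: (eqw_trans (eqw_catr _ E'')); apply: (eqw_trans (eqw_catr _ E)).
    rewrite cat_rcons; apply: (eqw_trans (eqw_dbl A2 v x u)); exact: Evu.
  have g'' : good v'' (x :: u).
    split => //; first by rewrite /Iword /= xI.
    have := Rwrc _ E3; rewrite size_cat /=; lia.
  have := Mv (size v'') (ex_intro _ v'' (ex_intro _ (x :: u) (conj g'' erefl))).
  lia.
have Hvs := IHN _ vsmall v s Rv erefl (Hx s (introT orP (or_introl (eqxx s)))).
have Hvt := IHN _ vsmall v t Rv erefl (Hx t (introT orP (or_intror (eqxx t)))).
have Ru : Ired n A s t u.
  move=> u' Iu' E; have := Rwrc (v ++ u') (eqw_trans (eqw_catl _ E) Evu).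
  rewrite size_cat; lia.
have R2 : forall u', Iword n s t u' -> eqw A u' (rcons u s) -> (size u <= size u')%N.
  move=> u' Iu' E; have := Hs (v ++ u').
  rewrite size_cat; move=> H; have : (N <= size v + size u')%N.
    apply: H; apply: (eqw_trans (eqw_catl _ E)); rewrite -rcons_cat.
    exact: eqw_rcons.
  lia.
have [X [Y [X0 [Y0 EXY]]]] := dihedral n A A2 s t st (hAll s t st) u Iu Ru R2.
move=> k.
have -> : wact_co A (rcons w1 t) (simple_coroot s) = wact_co A (v ++ u) (simple_coroot s) by rewrite Evu.
rewrite wact_co_cat EXY shift_lc // wact_lc ffunE.
by apply: addr_ge0; apply: mulr_ge0.
Qed.
End Humph.


Lemma enum_ab (a b : int) : a <= 0 -> b <= 0 -> (a == 0) = (b == 0) -> a * b < 4 ->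
  (a, b) \in [:: (0,0); (-1,-1); (-1,-2); (-2,-1); (-1,-3); (-3,-1)].
Proof.
move=> ha hb hab hp.
have [H1 H2] : (a = 0 -> b = 0) /\ (b = 0 -> a = 0) by split => /eqP H; apply/eqP; rewrite ?hab // -hab.
have : a = 0 \/ a = -1 \/ a = -2 \/ a = -3 by nia.
case=> [Ea|[Ea|[Ea|Ea]]]; subst a;
 (have : b = 0 \/ b = -1 \/ b = -2 \/ b = -3 by nia);
 case=> [Eb|[Eb|[Eb|Eb]]]; subst b; try by [].
all: exfalso; first [ lia | (have := H1 erefl; lia) | (have := H2 erefl; lia) ].
Qed.

Lemma sum2 (n : nat) (s t : 'I_n) (R : nmodType) (F : 'I_n -> R) : s != t ->
  (forall i, i != s -> i != t -> F i = 0) -> \sum_i F i = F s + F t.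
Proof.
move=> st H; rewrite (bigD1 s) //= (bigD1 t) 1?eq_sym //= big1 ?addr0 // => i /andP[it is0].
exact: H.
Qed.

Lemma cartan_rank2 n (A : 'I_n -> 'I_n -> int) (hA : finite_simple_cartan A) (s t : 'I_n) :
  s != t -> (A s t, A t s) \in [:: (0,0); (-1,-1); (-1,-2); (-2,-1); (-1,-3); (-3,-1)].
Proof.
move=> st; case: hA => _ [A2 Aoff Azero _ [d [dpos dsym dpd]]].
apply: enum_ab; [exact: Aoff| apply: Aoff; rewrite eq_sym // | exact: Azero|].
pose x k : rat := if k == s then - (A s t)%:~R else if k == t then 2 else 0.
have ts : t != s by rewrite eq_sym.
have x0 : forall i, i != s -> i != t -> x i = 0 by move=> i /negbTE is0 /negbTE it; rewrite /x is0 it.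
have nz : exists i, x i != 0 by exists t; rewrite /x (negbTE ts) eqxx.
have := dpd x nz.
rewrite (@sum2 _ s t _ _ st); last by move=> i is0 it; rewrite big1 // => j _; rewrite x0 // !mul0r.
rewrite (@sum2 _ s t _ _ st); last by move=> j js jt; rewrite (x0 j) // mulr0.
rewrite (@sum2 _ s t _ _ st); last by move=> j js jt; rewrite (x0 j) // mulr0.
rewrite /x eqxx (negbTE ts) eqxx !A2 => H.
have dt := dpos t.
have : ((A s t * A t s)%:~R : rat) < 4%:~R.
  rewrite intrM; nra.
by rewrite ltr_int.
Qed.


Section SC.
Variable n : nat.
Variable A : 'I_n -> 'I_n -> int.
Hypothesis A2 : forall i, A i i = 2.
Hypothesis hAll : forall s t : 'I_n, s != t ->
  (A s t, A t s) \in [:: (0,0); (-1,-1); (-1,-2); (-2,-1); (-1,-3); (-3,-1)].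

Lemma sign_coh v j : (forall k, 0 <= wact_co A v (simple_coroot j) k) \/
                     (forall k, wact_co A v (simple_coroot j) k <= 0).
Proof.
have [w [E Rw]] := reduced_exists A v.
rewrite -E.
case: (classic (forall w', eqw A w' (rcons w j) -> (size w <= size w')%N)) => P.
  by left; apply: (humph n A A2 hAll (size w) w j Rw erefl P).
have [w' HH] := not_all_ex_not _ _ P.
have [Ew' Sw'] := imply_to_and _ _ HH.
have lt : (size w' < size w)%N by rewrite ltnNge; apply/negP.
have [w'' [E'' R'']] := reduced_exists A w'.
have S'' := R'' w' (eqw_sym E'').
have Ew : eqw A (rcons w'' j) w.
  apply: (eqw_trans (eqw_rcons n A _ _ _ E'')); apply: (eqw_trans (eqw_rcons n A _ _ _ Ew')).
  move=> h; rewrite -!cats1 -catA /=.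
  by rewrite (eqw_dbl A2 w j [::] h) cats0.
have H := humph n A A2 hAll (size w'') w'' j R'' erefl.
have : forall k, 0 <= wact_co A w'' (simple_coroot j) k.
  apply: H => w3 E3; have := Rw w3 (eqw_trans E3 Ew); lia.
move=> Hn; right => k.
rewrite -(Ew (simple_coroot j)) wact_co_rcons (sref_simple A2) wact_lc ffunE.
have := Hn k; lia.
Qed.
End SC.


Section Pair.
Variable n : nat.
Variable A : 'I_n -> 'I_n -> int.

Lemma pairing_sref j (lam : weight n) (h : coweight n) :
  pairing (sref A j lam) h = pairing lam (sref_co A j h).
Proof.
rewrite /pairing.
under eq_bigr => i _ do rewrite ffunE mulrBr.
under [in RHS]eq_bigr => i _ do rewrite ffunE mulrBl.
rewrite !sumrB; congr (_ - _).
rewrite sum_pt mulr_suml; apply: eq_bigr => i _; ring.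
Qed.

Lemma pairing_wact w (lam : weight n) (h : coweight n) :
  pairing (wact A w lam) h = pairing lam (wact_co A (rev w) h).
Proof.
elim: w h => [//|j w IH] h.
by rewrite /= pairing_sref IH rev_cons wact_co_rcons.
Qed.

Lemma pairing_simple (lam : weight n) i : pairing lam (simple_coroot i) = lam i.
Proof.
rewrite /pairing (eq_bigr (fun k => (if k == i then 1 else 0) * lam k)) ?sum_pt ?mul1r //.
by move=> k _; rewrite ffunE.
Qed.

Lemma pairing_fund i (h : coweight n) : pairing (fund_weight i) h = h i.
Proof.
rewrite /pairing (eq_bigr (fun k => (if k == i then 1 else 0) * h k)) ?sum_pt ?mul1r //.
by move=> k _; rewrite ffunE mulrC.
Qed.

Lemma pairingD (l1 l2 : weight n) h : pairing (l1 + l2) h = pairing l1 h + pairing l2 h.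
Proof. by rewrite /pairing -big_split; apply: eq_bigr => i _; rewrite ffunE mulrDr. Qed.

Lemma pairingB (l1 l2 : weight n) h : pairing (l1 - l2) h = pairing l1 h - pairing l2 h.
Proof. by rewrite /pairing -sumrB; apply: eq_bigr => i _; rewrite !ffunE mulrBr. Qed.

Lemma pairing_lc (l : weight n) a b g1 g2 :
  pairing l (lc a b g1 g2) = a * pairing l g1 + b * pairing l g2.
Proof.
rewrite /pairing !mulr_sumr -big_split; apply: eq_bigr => i _; rewrite ffunE /=; ring.
Qed.

End Pair.

Lemma minr_case (x y : int) : (Num.min x y = x /\ x <= y) \/ (Num.min x y = y /\ y <= x).
Proof.
by case: (leP x y) => H; [left | right; split => //; exact: ltW].
Qed.


Lemma sum_ge (n : nat) (g x : 'I_n -> int) i0 : (forall k, 0 <= g k) -> (forall k, 0 <= x k) ->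
  g i0 * x i0 <= \sum_k g k * x k.
Proof.
move=> hg hx; rewrite (bigD1 i0) //= lerDl; apply: sumr_ge0 => k _; exact: mulr_ge0.
Qed.

Lemma sum_le (n : nat) (g x : 'I_n -> int) i0 : (forall k, g k <= 0) -> (forall k, 0 <= x k) ->
  \sum_k g k * x k <= g i0 * x i0.
Proof.
move=> hg hx; rewrite (bigD1 i0) //= gerDl; apply: sumr_le0 => k _; exact: mulr_le0_ge0.
Qed.

Lemma minA (a b c : int) : Num.min a b <= Num.min c (a + b - c) -> 0 <= (a - c) * (c - b).
Proof.
case: (minr_case a b) => [[-> ?]|[-> ?]]; case: (minr_case c (a + b - c)) => [[-> ?]|[-> ?]]; nia.
Qed.

Theorem proposition5p4 (n : nat) (A : 'I_n -> 'I_n -> int)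
  (hA : finite_simple_cartan A)
  (lam lam1 lam2 mu1 mu2 : weight n)
  (hlam : dominant lam)
  (hl : inP2 lam (lam1, lam2)) (hm : inP2 lam (mu1, mu2))
  (hprec : prec A (lam1, lam2) (mu1, mu2))
  (w : seq 'I_n) (i0 : 'I_n)
  (hw : dominant (wact A w (lam1 - lam2)))
  (hpos : 0 < wact A w (lam1 - mu1) i0 * wact A w (mu1 - lam2) i0) :
  inP2 lam (lam1 - wact A (rev w) (fund_weight i0),
            lam2 + wact A (rev w) (fund_weight i0))
  /\ prec A (lam1, lam2) (lam1 - wact A (rev w) (fund_weight i0),
                          lam2 + wact A (rev w) (fund_weight i0))
  /\ preceq A (lam1 - wact A (rev w) (fund_weight i0),
               lam2 + wact A (rev w) (fund_weight i0)) (mu1, mu2).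
Proof.
have hAll := cartan_rank2 n A hA.
have A2 : forall i, A i i = 2 by case: hA => _ [].
have SC := sign_coh n A A2 hAll.
case: hl => dl1 dl2 El. case: hm => dm1 dm2 Em.
case: hprec => hpre hnsim.
set nu := wact A (rev w) (fund_weight i0).
have vE : forall g, pairing nu g = wact_co A w g i0.
  by move=> g; rewrite /nu pairing_wact revK pairing_fund.
have mu2E : forall g, pairing mu2 g = pairing lam1 g + pairing lam2 g - pairing mu1 g.
  move=> g; have : pairing (lam1 + lam2) g = pairing (mu1 + mu2) g by rewrite El Em.
  rewrite !pairingD; lia.
pose orb (g : coweight n) := exists v j, g = wact_co A v (simple_coroot j).
have negE : forall v j, wact_co A (rcons v j) (simple_coroot j) =
     lc (-1) 0 (wact_co A v (simple_coroot j)) (wact_co A v (simple_coroot j)).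
  by move=> v j; rewrite wact_co_rcons (sref_simple A2) wact_lc.
have PN : forall g, orb g -> pos_coroot A g \/ pos_coroot A (lc (-1) 0 g g).
  move=> g [v [j ->]]; case: (SC v j) => H; [left|right]; split.
  - by exists v; exists j.
  - exact: H.
  - by exists (rcons v j); exists j; rewrite negE.
  - by move=> k; rewrite ffunE; have := H k; lia.
have INT : forall g, orb g ->
    0 <= (pairing lam1 g - pairing mu1 g) * (pairing mu1 g - pairing lam2 g).
  move=> g og; case: (PN g og) => P; have := hpre _ P; rewrite /minpair /= ?mu2E ?pairing_lc;
  move/minA; nia.
pose X j := wact A w (lam1 - mu1) j.
pose Y j := wact A w (mu1 - lam2) j.
have XE : forall j, X j = pairing lam1 (wact_co A (rev w) (simple_coroot j)) - pairing mu1 (wact_co A (rev w) (simple_coroot j)).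
  by move=> j; rewrite /X -pairing_simple pairing_wact pairingB.
have YE : forall j, Y j = pairing mu1 (wact_co A (rev w) (simple_coroot j)) - pairing lam2 (wact_co A (rev w) (simple_coroot j)).
  by move=> j; rewrite /Y -pairing_simple pairing_wact pairingB.
have orbj : forall j, orb (wact_co A (rev w) (simple_coroot j)) by move=> j; exists (rev w), j.
have XY0 : forall j, 0 <= X j /\ 0 <= Y j.
  move=> j; have := INT _ (orbj j); have := hw j.
  rewrite -pairing_simple pairing_wact pairingB -XE -YE.
  rewrite XE YE; move: (pairing lam1 _) (pairing lam2 _) (pairing mu1 _) => a b c; nia.
have X1 : 1 <= X i0 /\ 1 <= Y i0.
  have := XY0 i0; move: hpos; rewrite -/(X i0) -/(Y i0); nia.
have KEY : forall g, orb g ->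
   let C := pairing nu g in
   let XX := pairing lam1 g - pairing mu1 g in
   let YY := pairing mu1 g - pairing lam2 g in
   (0 <= C /\ C <= XX /\ C <= YY) \/ (C <= 0 /\ XX <= C /\ YY <= C).
  move=> g [v [j gE]] C XX YY.
  pose g' := wact_co A w g.
  have gg : g = wact_co A (rev w) g' by rewrite /g' wact_co_revK.
  have XXE : XX = \sum_k g' k * X k.
    rewrite /XX -pairingB gg -pairing_wact /pairing; by [].
  have YYE : YY = \sum_k g' k * Y k.
    rewrite /YY -pairingB gg -pairing_wact /pairing; by [].
  have CE : C = g' i0 by rewrite /C vE.
  have og' : g' = wact_co A (w ++ v) (simple_coroot j) by rewrite wact_co_cat /g' gE.
  case: (SC (w ++ v) j); rewrite -og' => H; [left|right].
  - have h1 := sum_ge n g' X i0 H (fun k => proj1 (XY0 k)).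
    have h2 := sum_ge n g' Y i0 H (fun k => proj2 (XY0 k)).
    have := H i0; rewrite XXE YYE CE; nia.
  - have h1 := sum_le n g' X i0 H (fun k => proj1 (XY0 k)).
    have h2 := sum_le n g' Y i0 H (fun k => proj2 (XY0 k)).
    have := H i0; rewrite XXE YYE CE; nia.
have orbs : forall i, orb (simple_coroot i) by move=> i; exists [::], i.
split; [split|split; [split|]].
- move=> i /=; rewrite !ffunE; have := KEY _ (orbs i); rewrite /= !pairing_simple.
  have := dl1 i; have := dl2 i; rewrite /=; lia.
- move=> i /=; rewrite !ffunE; have := KEY _ (orbs i); rewrite /= !pairing_simple.
  have := dl1 i; have := dl2 i; rewrite /=; lia.
- rewrite /= -El; apply/ffunP => k; rewrite !ffunE /=; ring.
- move=> h [[v [j hE]] _]; have := KEY h (ex_intro _ v (ex_intro _ j hE)).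
  rewrite /minpair /= pairingB pairingD /=.
  move: (pairing lam1 h) (pairing lam2 h) (pairing mu1 h) (pairing nu h) => a b c C.
  case: (minr_case a b) => [[-> ?]|[-> ?]]; case: (minr_case (a - C) (b + C)) => [[-> ?]|[-> ?]]; lia.
- move=> Hs.
  pose g0 := wact_co A (rev w) (simple_coroot i0).
  have C1 : pairing nu g0 = 1.
    by rewrite vE /g0 (wact_co_Krev A2) /simple_coroot ffunE eqxx.
  have hX := XE i0; have hY := YE i0; rewrite -/g0 in hX hY.
  case: (PN g0 (orbj i0)) => P; have := Hs _ P; rewrite /minpair /= !pairingB !pairingD ?pairing_lc ?C1;
  move: X1; rewrite hX hY;
  move: (pairing lam1 g0) (pairing lam2 g0) (pairing mu1 g0) => a b c;
  case: (minr_case a b) => [[-> ?]|[-> ?]] || idtac; lia.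
- move=> h [[v [j hE]] _]; have := KEY h (ex_intro _ v (ex_intro _ j hE)).
  rewrite /minpair /= pairingB pairingD mu2E /=.
  move: (pairing lam1 h) (pairing lam2 h) (pairing mu1 h) (pairing nu h) => a b c C.
  case: (minr_case (a - C) (b + C)) => [[-> ?]|[-> ?]]; case: (minr_case c (a + b - c)) => [[-> ?]|[-> ?]]; lia.
Qed.
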